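(* Let $(\mathcal{S}_n)_{n\in\mathbb{N}}$ be a sequence of solid subsets of $\mathbb{L}^0_+$. Then $\bigcap_{n\in\mathbb{N}}\mathcal{S}_n=\{0\}$ holds if and only if $\bigcap_{n\in\mathbb{N}}\overline{\mathcal{S}_n}=\{0\}$, where $\overline{\mathcal{S}_n}$ is the closure of $\mathcal{S}_n$ in $\mathbb{L}^0$.
   Context: $(\Omega,\mathcal{F},\mathbb{P})$ is a probability space; $\mathbb{L}^0$ is the space of (equivalence classes modulo null sets of) real-valued random variables with the topology of convergence in probability; $\mathbb{L}^0_+$ its nonnegative elements. $\mathcal{S}\subseteq\mathbb{L}^0_+$ is solid if $Y\in\mathbb{L}^0_+$, $X\in\mathcal{S}$, $Y\le X$ imply $Y\in\mathcal{S}$. *)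

(* Defs.v *)
From HB Require Import structures.
From mathcomp Require Import all_boot all_order all_algebra.
From mathcomp Require Import all_classical all_reals all_analysis.
Set Implicit Arguments. Unset Strict Implicit. Unset Printing Implicit Defensive.
Import Order.TTheory GRing.Theory Num.Theory.
Local Open Scope classical_set_scope.
Local Open Scope ring_scope.

(* Elements of L^0 are represented by measurable functions T -> R;
   equivalence classes modulo P-null sets are handled by a.e. equality. *)
Section L0.
Context (d : measure_display) (T : measurableType d) (R : realType)
  (P : probability T R).

Definition inL0 (S : set (T -> R)) (X : T -> R) : Prop :=
  measurable_fun setT X /\ exists Y : T -> R, S Y /\ {ae P, forall x, X x = Y x}.

Definition solidL0 (S : set (T -> R)) : Prop :=
  (forall X, S X -> measurable_fun setT X /\ {ae P, forall x, 0 <= X x}) /\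
  (forall X Y : T -> R, S X -> measurable_fun setT Y ->
     {ae P, forall x, 0 <= Y x} -> {ae P, forall x, Y x <= X x} -> S Y).

(* closure of S in L^0 for the topology of convergence in probability,
   whose basic neighbourhoods of X are
   {Y : P(|X - Y| > eps) < delta}, eps, delta > 0. *)
Definition closureL0 (S : set (T -> R)) : set (T -> R) :=
  fun X => measurable_fun setT X /\
    forall eps delta : R, 0 < eps -> 0 < delta ->
      exists Y : T -> R, S Y /\ measurable_fun setT Y /\
        (P [set x | (eps < `|X x - Y x|)%R] < delta%:E)%E.

Definition bigcap_eq0 (S : nat -> set (T -> R)) : Prop :=
  forall X, measurable_fun setT X ->
    ((forall n, inL0 (S n) X) <-> {ae P, forall x, X x = 0}).

End L0.

(* Main.v *)
Require Import Defs.
From HB Require Import structures.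
From mathcomp Require Import all_boot all_order all_algebra.
From mathcomp Require Import all_classical all_reals all_analysis.
From mathcomp Require Import lra.
Import Order.TTheory GRing.Theory Num.Theory.
Local Open Scope classical_set_scope.
Local Open Scope ring_scope.

Section helpers.
Context (d : measure_display) (T : measurableType d) (R : realType)
  (P : probability T R).

Lemma mset_gt (f : T -> R) (e : R) : measurable_fun setT f ->
  measurable [set x | e < `|f x|].
Proof.
move=> mf.
have mg : measurable_fun setT (fun x => `|f x|) := measurableT_comp (@measurable_realfun.normr_measurable R setT) mf.
rewrite (_ : [set x | e < `|f x|] = setT `&` (fun x => `|f x|) @^-1` `]e, +oo[).
  by apply: mg => //; exact: measurable_itv.
by apply/seteqP; split => x /=; rewrite ?in_itv /= ?andbT => // -[].
Qed.

Lemma sub_closure S X : solidL0 P S -> S X -> closureL0 P S X.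
Proof.
move=> [hS _] SX; split; first by case: (hS X SX).
move=> e del e0 d0; exists X; split => //; split; first by case: (hS X SX).
rewrite (_ : [set x | _] = set0) ?measure0 ?lte_fin //.
by apply/seteqP; split => x //=; rewrite subrr normr0 ltNge (ltW e0).
Qed.

Lemma inL0_closure S X : solidL0 P S -> inL0 P S X -> inL0 P (closureL0 P S) X.
Proof.
move=> hS [mX [Y [SY hY]]]; split => //; exists Y; split => //.
exact: sub_closure.
Qed.

Lemma zero_in (S : set (T -> R)) (X Z : T -> R) : solidL0 P S -> S Z -> measurable_fun setT X ->
  {ae P, forall x, X x = 0} -> S X.
Proof.
move=> [hS1 hS2] SZ mX hX; apply: (hS2 Z) => //.
  by apply: filterS hX => x ->.
case: (hS1 Z SZ) => _ hZ.
by apply: filterS2 hX hZ => x ->.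
Qed.

End helpers.

Theorem lemmaA2 (d : measure_display) (T : measurableType d) (R : realType)
  (P : probability T R) (S : nat -> set (T -> R)) :
  (forall n, solidL0 P (S n)) ->
  (bigcap_eq0 P S <-> bigcap_eq0 P (fun n => closureL0 P (S n))).
Proof.
move=> hS; split => [h0|hC]; last first.
  move=> X mX; split.
    by move=> H; apply/(hC X mX) => n; apply: inL0_closure.
  move=> hX n; case: (proj2 (hC X mX) hX n) => _ [W [[_ cW] _]].
  have [Y [SY _]] := cW 1 1 ltr01 ltr01.
  split => //; exists X; split; last exact: aeW.
  exact: zero_in SY mX hX.
move=> X mX; split; last first.
  by move=> hX n; apply: inL0_closure => //; exact: (proj2 (h0 X mX) hX n).
move=> H; apply: contrapT => nX.
pose B k := [set x | (k.+1%:R)^-1 < `|X x|] : set T.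
have mB k : measurable (B k) := @mset_gt _ _ _ _ (k.+1%:R)^-1 mX.
have [k Bk] : exists k, (0 < P (B k))%E.
  apply: contrapT => hk; apply: nX.
  have Bk0 k : P (B k) = 0%E.
    apply/eqP; rewrite eq_le measure_ge0 andbT leNgt; apply/negP => h.
    by apply: hk; exists k.
  exists (\bigcup_k B k); split; first by apply: bigcupT_measurable => i; exact: mB.
    apply/eqP; rewrite eq_le measure_ge0 andbT.
    have := @measure_sigma_subadditive _ _ _ P (\bigcup_k B k) B mB
      (bigcupT_measurable B mB) (@subset_refl _ _).
    by rewrite eseries0 // => n _ _; exact: Bk0.
  move=> x /= hx; have Xx : 0 < `|X x| by rewrite normr_gt0; apply/eqP.
  exists (Num.trunc (`|X x|^-1)) => //; rewrite /B /=.
  rewrite invf_plt ?posrE ?ltr0n //; exact: truncnS_gt.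
have fB : P (B k) = (fine (P (B k)))%:E by rewrite fineK // fin_num_measure.
set p := fine (P (B k)) in fB.
have p0 : 0 < p by rewrite -lte_fin -fB.
pose eps := (k.+1%:R)^-1 / 2 : R.
have e2 : (k.+1%:R)^-1 = 2 * eps :> R by rewrite /eps mulrC divfK.
have e0 : 0 < eps by rewrite /eps divr_gt0 // invr_gt0 ltr0n.
pose del n := (p / 2) / (2 ^ n.+1)%:R.
have /choice [W hW] : forall n, exists W,
    closureL0 P (S n) W /\ {ae P, forall x, X x = W x}.
  by move=> n; case: (H n) => _ [W [? ?]]; exists W.
have /choice [Y hY] : forall n, exists Y0, S n Y0 /\ measurable_fun setT Y0 /\
    (P [set x | (eps < `|W n x - Y0 x|)%R] < (del n)%:E)%E.
  move=> n; case: (hW n) => [[_ c] _]; apply: c => //.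
  by rewrite /del divr_gt0 // ?divr_gt0 // ltr0n expn_gt0.
pose C n := [set x | eps < `|W n x - Y n x|].
have mC n : measurable (C n).
  apply: mset_gt; apply: measurable_realfun.measurable_funB; first by case: (hW n) => -[].
  by case: (hY n) => _ [].
pose A := B k `\` \bigcup_n C n.
have mA : measurable A := measurableD (mB k) (bigcupT_measurable C mC).
pose Z := fun x => eps * \1_A x.
have mZ : measurable_fun setT Z.
  by apply: measurable_realfun.measurable_funM; [exact: measurable_cst | exact: measurable_realfun.measurable_indic].
have SZ n : S n Z.
  case: (hS n) => [hS1 hS2]; case: (hY n) => [SY [mY _]].
  apply: (hS2 (Y n)) => //.
    by apply: aeW => x; apply: mulr_ge0; [exact: ltW | rewrite indicE; exact: ler0n].
  case: (hS1 _ SY) => _ hY0; case: (hW n) => _ hXW.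
  apply: filterS2 hXW hY0 => x XW Y0; rewrite /Z indicE.
  case: (boolP (x \in A)) => [/set_mem [Bx nC]|_]; last by rewrite mulr0.
  rewrite mulr1.
  have hC : `|W n x - Y n x| <= eps.
    by rewrite leNgt; apply/negP => h; apply: nC; exists n.
  have : `|W n x| <= `|W n x - Y n x| + Y n x.
    by rewrite -{2}(ger0_norm Y0); apply: le_trans (ler_normD _ _); rewrite subrK.
  move: Bx; rewrite /B /= XW e2 => Bx; lra.
have hZ := proj1 (h0 Z mZ) (fun n => conj mZ (ex_intro _ Z (conj (SZ n) (aeW _ (fun x => erefl))))).
have PA0 : P A = 0%E.
  case: hZ => N [mN PN sN]; apply/eqP; rewrite eq_le measure_ge0 andbT -PN.
  apply: le_measure; rewrite ?inE // => x Ax; apply: sN => /=.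
  by rewrite /Z indicE mem_set // mulr1; apply/eqP; rewrite gt_eqF.
have : (P (B k) <= P A + \sum_(n <oo) P (C n))%E.
  apply: (@le_trans _ _ (P (A `|` \bigcup_n C n))).
    apply: le_measure; rewrite ?inE //; first by apply: measurableU => //; exact: bigcupT_measurable C mC.
    by move=> x Bx; case: (pselect ((\bigcup_n C n) x)); [right|left; split].
  apply: le_trans (measureU2 P mA (bigcupT_measurable C mC)) _.
  rewrite leeD2l //.
  exact: (@measure_sigma_subadditive _ _ _ P _ C mC (bigcupT_measurable C mC)).
rewrite PA0 add0e fB => h.
have : (\sum_(n <oo) P (C n) <= (p/2)%:E)%E.
  apply: le_trans (epsilon_trick0 xpredT _); last by rewrite divr_ge0 // ltW.
  apply: lee_nneseries => // n _; exact: ltW (hY n).2.2.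
move=> /(le_trans h); rewrite lee_fin => hp.
have hp2 : p / 2 < p by rewrite ltr_pdivrMr // ltr_pMr // ltr1n.
by move: (le_lt_trans hp hp2); rewrite ltxx.
Qed.
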